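(* If a finite soluble group $G=AB$ is the product of its normal subgroups $A$ and $B$, then $\overline{\Gamma}_s(G)=\overline{\Gamma}_s(A)\cup\overline{\Gamma}_s(B)$.
   Context: All groups are finite; $\pi(G)$ is the set of prime divisors of $|G|$. The Sylow graph $\Gamma_s(G)$ is the directed graph with vertex set $\pi(G)$ and an edge $(p,q)$ whenever $q\in\pi(N_G(P)/PC_G(P))$ for some Sylow $p$-subgroup $P$ of $G$. For a directed graph $\Gamma$, $\overline{\Gamma}$ is the undirected graph on the same vertex set in which two vertices are joined by an edge if they are joined (in either direction) by an edge of $\Gamma$. Union of graphs takes the union of vertex sets and of edge sets. *)

(* Defs.v *)
From mathcomp Require Import all_boot all_fingroup all_solvable.
Set Implicit Arguments. Unset Strict Implicit. Unset Printing Implicit Defensive.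
Local Open Scope group_scope.

Definition sylow_vertex (gT : finGroupType) (G : {set gT}) (p : nat) : bool :=
  p \in \pi(G).

Definition sylow_edge (gT : finGroupType) (G : {group gT}) (p q : nat) : bool :=
  [&& p \in \pi(G), q \in \pi(G) &
   [exists P : {group gT},
      (P \in 'Syl_p(G)) && (q \in \pi('N_G(P) / (P <*> 'C_G(P))))]].

Definition usylow_edge (gT : finGroupType) (G : {group gT}) (p q : nat) : bool :=
  sylow_edge G p q || sylow_edge G q p.

(* Main.v *)
Require Import Defs.
From mathcomp Require Import all_boot all_fingroup all_solvable.
Set Implicit Arguments. Unset Strict Implicit. Unset Printing Implicit Defensive.
Local Open Scope group_scope.

Definition noedge (gT : finGroupType) (X : {set gT}) :=
  forall (r : nat) (R : {group gT}), r.-Sylow(X) R -> 'N_X(R) \subset R * 'C_X(R).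

Lemma noedge_quo (gT : finGroupType) (X N R : {group gT}) (s : nat) :
  N <| X -> s.-Sylow(X) R -> 'N_X(R) \subset R * 'C_X(R) ->
  'N_(X / N)(R / N) \subset (R / N) * 'C_(X / N)(R / N).
Proof.
move=> nsNX sylR hR.
have [sNX nNX] := andP nsNX.
have sRX := pHall_sub sylR.
have nNR : R \subset 'N(N) := subset_trans sRX nNX.
have defM : N <*> R = N * R by rewrite norm_joinEr.
set M := (N <*> R)%G.
have sMX : M \subset X by rewrite join_subG sNX.
have nsNM : N <| M by rewrite /normal joing_subl join_subG normG.
have eMR : M / N = R / N by rewrite /= defM quotientMidl.
rewrite -eMR -quotient_subnormG //.
have nsMNM : M <| 'N_X(M).
  exact: normalSG.
have sylRM : s.-Sylow(M) R := pHall_subl (joing_subr _ _) sMX sylR.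
rewrite -(Frattini_arg nsMNM sylRM).
have nMN : M \subset 'N(N) by rewrite join_subG normG.
rewrite quotientMl // eMR.
have -> : R / N * 'C_(X / N)(R / N) = R / N * (R / N * 'C_(X / N)(R / N)).
  by rewrite mulgA mulGid.
have h1 : 'N_('N_X(M))(R) \subset R * 'C_X(R).
  apply: subset_trans (hR); apply: setSI; exact: subsetIl.
have h2 : 'N_('N_X(M))(R) / N \subset R / N * 'C_(X / N)(R / N).
  apply: subset_trans (quotientS N h1) _.
  rewrite quotientMl //; apply: mulgS; exact: quotient_subcent.
exact: mulgS h2.
Qed.

Lemma noedge_quoG (gT : finGroupType) (X N : {group gT}) :
  N <| X -> noedge X -> noedge (X / N).
Proof.
move=> nsNX hX s Sb sylSb.
have [sNX nNX] := andP nsNX.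
have [R sylR] := Sylow_exists s X.
have nNR : R \subset 'N(N) := subset_trans (pHall_sub sylR) nNX.
have sylRN : s.-Sylow(X / N) (R / N) := quotient_pHall nNR sylR.
have [xb Xxb defSb] := Sylow_trans sylRN sylSb.
have [x nNx Xx defxb] := morphimP Xxb.
rewrite defSb defxb -quotientJ //.
apply: (@noedge_quo _ _ _ (R :^ x)%G s) => //; first by rewrite pHallJ.
by apply: (hX s); rewrite pHallJ.
Qed.

Lemma core_nil (gT : finGroupType) (X : {group gT}) :
  solvable X -> noedge X -> nilpotent X.
Proof.
have [n] := ubnP #|X|; elim: n gT X => // n IHn gT X /ltnSE-leXn solX hX.
have [-> | ntX] := eqsVneq X 1; first exact: nilpotent1.
have [N [sNX nsNX ntN abN]] := solvable_norm_abelem solX (normal_refl X) ntX.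
have [r pr_r /and3P[rN _ _]] := is_abelemP abN.
have nNX := normal_norm nsNX.
have nilXN : nilpotent (X / N).
  apply: IHn; last exact: noedge_quoG.
  - exact: leq_trans (ltn_quotient ntN sNX) leXn.
  - exact: quotient_sol.
have [R sylR] := Sylow_exists r X.
have sRX := pHall_sub sylR.
have rR := pHall_pgroup sylR.
have nNR : R \subset 'N(N) := subset_trans sRX nNX.
have sylRN : r.-Sylow(X / N) (R / N) := quotient_pHall nNR sylR.
have sNR : N \subset R.
  apply: subset_trans (pcore_sub_Hall sylR); exact: pcore_max.
have nsRNXN : R / N <| X / N.
  by rewrite (nilpotent_Hall_pcore nilXN sylRN) pcore_normal.
have nsRX : R <| X.
  have nsNR : N <| R by rewrite /normal sNR.
  by rewrite -(quotientGK nsNR) -(quotientGK nsNX) cosetpre_normal.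
have nRX := normal_norm nsRX.
have sXRC : X \subset R * 'C_X(R).
  by have := hX r R sylR; rewrite (setIidPl nRX).
have [H hallH] := Hall_exists r^' solX.
have sHX := pHall_sub hallH.
have r'H := pHall_pgroup hallH.
set C := 'C_X(R).
have nCX : X \subset 'N(C) by rewrite normsI ?normG ?norms_cent.
have sHC : H \subset C.
  have nCH : H \subset 'N(C) := subset_trans sHX nCX.
  rewrite -quotient_sub1 //.
  have sHCRC : H / C \subset R / C.
    rewrite -(quotientMidr C R).
    exact: subset_trans (quotientS C sHX) (quotientS C sXRC).
  have co : coprime #|H / C| #|R / C|.
    rewrite coprime_sym; apply: (pnat_coprime (quotient_pgroup _ rR)).
    exact: quotient_pgroup.
  by rewrite -(coprime_TIg co) subsetI subxx.
have coRH : coprime #|R| #|H| := pnat_coprime rR r'H.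
have defX : R * H = X.
  apply/eqP; rewrite eqEcard mul_subG //= coprime_cardMg //.
  rewrite (card_Hall sylR) (card_Hall hallH) partnC //.
have cRH : H \subset 'C(R) := subset_trans sHC (subsetIr _ _).
have nsHX : H <| X.
  rewrite /normal sHX -defX mul_subG ?normG //.
  by rewrite -centsC in cRH; exact: cents_norm cRH.
have nilH : nilpotent H.
  have tiNH : N :&: H = 1.
    apply: coprime_TIg; exact: coprimeSg sNR coRH.
  have nNH : H \subset 'N(N) := subset_trans sHX nNX.
  rewrite (isog_nil (quotient_isog nNH tiNH)).
  exact: nilpotentS (quotientS N sHX) nilXN.
apply: (nilpotentS _ (Fitting_nil X)).
rewrite -{1}defX; apply: mul_subG; apply: Fitting_max => //.
exact: pgroup_nil rR.
Qed.

Definition pq (p q : nat) : nat_pred := [pred r | (r == p) || (r == q)].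

Definition NN (gT : finGroupType) (X : {group gT}) p q :=
  exists K : {group gT}, [/\ K \subset X, (pq p q).-group K & ~~ nilpotent K].

Lemma constt_in (gT : finGroupType) (G : {group gT}) x pi : x \in G -> x.`_pi \in G.
Proof. by move=> Gx; rewrite /constt groupX. Qed.

Lemma inpi (gT : finGroupType) (G : {group gT}) p : prime p -> p %| #|G| -> p \in \pi(G).
Proof. by move=> pr d; rewrite mem_primes pr cardG_gt0. Qed.

Lemma inpi_inv (gT : finGroupType) (G : {set gT}) p : p \in \pi(G) -> prime p /\ p %| #|G|.
Proof. by rewrite mem_primes => /and3P[]. Qed.

Lemma edge_NN (gT : finGroupType) (X : {group gT}) p q :
  sylow_edge X p q -> NN X p q.
Proof.
case/and3P=> pX qX /existsP[P /andP[sylP qQ]].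
rewrite inE in sylP.
have [pr_p _] := inpi_inv pX.
have [pr_q qdv] := inpi_inv qQ.
set C := 'C_X(P).
set K0 := (P <*> C)%G.
have sPX := pHall_sub sylP.
have pP := pHall_pgroup sylP.
have sPN : P \subset 'N_X(P) by rewrite subsetI sPX normG.
have nPC : P \subset 'N(C) by rewrite normsI ?normG ?norms_cent ?normG // (subset_trans sPX (normG X)).
have defK0 : P <*> C = P * C by rewrite norm_joinEl.
have nK0N : 'N_X(P) \subset 'N(K0).
  rewrite /= norms_gen // normsU //; first exact: subsetIr.
  by rewrite normsI ?norms_cent ?subsetIr // (subset_trans (subsetIl _ _) (normG X)).
have sK0N : K0 \subset 'N_X(P).
  rewrite /= join_subG sPN subsetI subsetIl /=.
  by apply: cents_norm; apply: subsetIr.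
have [eqpq | neqpq] := eqVneq p q.
  exfalso; move: qdv; rewrite -eqpq card_quotient //.
  have sylPN : p.-Sylow('N_X(P)) P := pHall_subl sPN (subsetIl _ _) sylP.
  have [_ _ p'idx] := and3P sylPN => dv.
  have dv2 : p %| #|'N_X(P) : P| := dvdn_trans dv (indexgS _ (joing_subl P C)).
  by move: p'idx; rewrite p'natE // dv2.
have nK0Nx : 'N_X(P) \subset 'N(K0) := nK0N.
have [xb Nxb oxb] := Cauchy pr_q qdv.
have [x nKx Nx defxb] := morphimP Nxb.
set y := x.`_q.
have Ny : y \in 'N_X(P) := constt_in _ Nx.
have ybe : coset K0 y = xb.
  rewrite /y morph_constt // -defxb constt_p_elt //.
  by rewrite /p_elt oxb pnat_id.
have nCy : y \notin 'C(P).
  apply/negP => cy.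
  have : y \in K0.
    rewrite /= defK0; rewrite -[y]mul1g; apply: mem_mulg; first exact: group1.
    by rewrite inE cy andbT (subsetP (subsetIl _ _) _ Ny).
  move/coset_id; rewrite ybe => xb1.
  by move: oxb; rewrite xb1 order1 => q1; rewrite -q1 in pr_q.
have nPy : <[y]> \subset 'N(P) by rewrite cycle_subG; case/setIP: Ny.
exists (P <*> <[y]>)%G; split.
- by rewrite join_subG sPX cycle_subG; case/setIP: Ny.
- rewrite /= norm_joinEr // pgroupM; apply/andP; split.
    by apply: sub_pgroup pP => t; rewrite !inE => /eqP->; rewrite eqxx.
  by apply: sub_pgroup (p_elt_constt q x) => t; rewrite !inE => /eqP->; rewrite eqxx orbT.
- apply/negP => nilK.
  have co : coprime #|P| #|<[y]>|.
    apply: (pnat_coprime pP); apply: sub_pgroup (p_elt_constt q x) => t.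
    by rewrite !inE => /eqP->; rewrite eq_sym.
  have := sub_nilpotent_cent2 nilK (joing_subl _ _) (joing_subr _ _) co.
  by rewrite cycle_subG (negbTE nCy).
Qed.

Lemma mk_edge (gT : finGroupType) (X H R : {group gT}) p q y :
  (pq p q).-Hall(X) H -> p.-Sylow(H) R -> y \in 'N_H(R) ->
  y \notin R * 'C_H(R) -> sylow_edge X p q.
Proof.
move=> hallH sylRH NHy nRCy.
have ppq : p \in pq p q by rewrite !inE eqxx.
have sylR : p.-Sylow(X) R := subHall_Sylow hallH ppq sylRH.
have sHX := pHall_sub hallH.
have sRH := pHall_sub sylRH.
have sRX := pHall_sub sylR.
have pR := pHall_pgroup sylR.
have Hy : y \in H by case/setIP: NHy.
have Xy : y \in X := subsetP sHX y Hy.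
set y' := y.`_p^'.
have NHy' : y' \in 'N_H(R) := constt_in _ NHy.
have Ry_p : y.`_p \in R.
  have sRN : R \subset 'N_H(R) by rewrite subsetI sRH normG.
  have hR : p.-Hall('N_H(R)) R := pHall_subl sRN (subsetIl _ _) sylRH.
  by rewrite (mem_normal_Hall hR (normalSG sRH)) ?p_elt_constt ?constt_in.
have nRCy' : y' \notin R * 'C_H(R).
  apply: contra nRCy => RCy'.
  by have := mem_mulg Ry_p RCy'; rewrite mulgA mulGid consttC.
have nRCXy' : y' \notin R * 'C_X(R).
  apply: contra nRCy' => h.
  have : y' \in (R * 'C_X(R)) :&: H by rewrite inE h; case/setIP: NHy'.
  rewrite -group_modl // => h2.
  by move: h2; rewrite setIAC (setIidPr sHX).
set C := 'C_X(R).
set K0 := (R <*> C)%G.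
have defK0 : R <*> C = R * C.
  rewrite norm_joinEl // normsI ?normG ?norms_cent ?normG //.
  exact: subset_trans sRX (normG X).
have nK0N : 'N_X(R) \subset 'N(K0).
  rewrite /= norms_gen // normsU //; first exact: subsetIr.
  by rewrite normsI ?norms_cent ?subsetIr // (subset_trans (subsetIl _ _) (normG X)).
have NXy' : y' \in 'N_X(R).
  by case/setIP: NHy' => Hy' Ny'; rewrite inE Ny' (subsetP sHX).
set yb := coset K0 y'.
have ybN : yb \in 'N_X(R) / K0 by apply: mem_quotient.
have yb1 : yb != 1.
  apply: contra nRCXy' => /eqP yb1.
  by rewrite -defK0; apply: coset_idr => //; apply: (subsetP nK0N).
have oyb : 1 < #[yb] by rewrite order_gt1.
set t := pdiv #[yb].
have pr_t := pdiv_prime oyb.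
have dvy : #[yb] %| #[y'] := morph_order _ (subsetP nK0N _ NXy').
have tdv : t %| #[y'] := dvdn_trans (pdiv_dvd _) dvy.
have tpi : t \in \pi(#[y']) by rewrite mem_primes pr_t order_gt0.
have hpq : (pq p q).-elt y'.
  apply: (mem_p_elt (pHall_pgroup hallH)); exact: constt_in.
have tq : t = q.
  have := pnatPpi hpq tpi; rewrite !inE => /orP[/eqP tp | /eqP //].
  have := pnatPpi (p_elt_constt p^' y) tpi.
  by rewrite !inE tp eqxx.
have qX : q %| #|X|.
  by rewrite -tq (dvdn_trans tdv) // order_dvdG // (subsetP sHX) // constt_in.
apply/and3P; split.
- have ntR : R :!=: 1.
    apply: contra nRCXy' => /eqP R1.
    rewrite /C R1 mul1g cent1T setIT.
    by case/setIP: NXy'.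
  have [pr_p dvR _] := pgroup_pdiv pR ntR.
  by apply: inpi => //; apply: dvdn_trans dvR (cardSg sRX).
- by rewrite mem_primes cardG_gt0 -tq pr_t /= tq.
apply/existsP; exists R; rewrite inE sylR /=.
apply: inpi; first by rewrite -tq.
rewrite -tq (dvdn_trans (pdiv_dvd _)) //.
exact: order_dvdG ybN.
Qed.

Lemma pq_sym p q : pq p q =i pq q p.
Proof. by move=> t; rewrite !inE orbC. Qed.

Lemma NN_edge (gT : finGroupType) (X : {group gT}) p q :
  solvable X -> NN X p q -> sylow_edge X p q || sylow_edge X q p.
Proof.
move=> solX [K [sKX pqK nnK]].
have [H hallH sKH] := Hall_superset solX sKX pqK.
have sHX := pHall_sub hallH.
have pqH := pHall_pgroup hallH.
apply/negPn/negP => noE.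
have: nilpotent H.
  apply: core_nil; first exact: solvableS solX.
  move=> r R sylR; apply/subsetP => y NHy.
  apply/negPn/negP => nRCy.
  have rpq : (r == p) || (r == q).
    apply/negPn/negP => nr.
    have R1 : R :=: 1.
      apply/eqP; rewrite trivg_card1; apply/eqP.
      apply: (pnat_1 (pHall_pgroup sylR)).
      apply: sub_pgroup (pgroupS (pHall_sub sylR) pqH) => t.
      rewrite !inE; apply: contraL => /eqP ->; exact: nr.
    by move: nRCy; rewrite R1 mul1g cent1T setIT; case/setIP: NHy => ->.
  case/orP: rpq => /eqP rE; rewrite rE in sylR.
  - by move: noE; rewrite (mk_edge hallH sylR NHy nRCy).
  - rewrite (eq_pHall _ _ (pq_sym p q)) in hallH.
    by move: noE; rewrite (mk_edge hallH sylR NHy nRCy) orbT.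
by move=> nilH; move: nnK; rewrite (nilpotentS sKH nilH).
Qed.

Lemma NN_sym (gT : finGroupType) (X : {group gT}) p q : NN X p q -> NN X q p.
Proof.
by case=> K [sKX pqK nnK]; exists K; split => //; rewrite (eq_pgroup _ (pq_sym q p)).
Qed.

Lemma NN_split (gT : finGroupType) (G A B : {group gT}) p q :
  solvable G -> A <| G -> B <| G -> A * B = G ->
  NN G p q -> ~ NN A p q -> NN B p q.
Proof.
move=> solG nsAG nsBG defG [K [sKG pqK nnK]] nA.
have [H hallH sKH] := Hall_superset solG sKG pqK.
have sHG := pHall_sub hallH.
have hA := Hall_setI_normal nsAG hallH.
have hB := Hall_setI_normal nsBG hallH.
have hAB := Hall_setI_normal (normalI nsAG nsBG) hallH.
set pi := pq p q in hallH hA hB hAB.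
have nilHA : nilpotent (H :&: A).
  apply/negPn/negP => nn; apply: nA; exists (H :&: A)%G; split => //.
  - exact: subsetIr.
  - exact: pHall_pgroup hA.
have [nilHB | nnB] := boolP (nilpotent (H :&: B)); last first.
  exists (H :&: B)%G; split => //; [exact: subsetIr | exact: pHall_pgroup hB].
exfalso.
  have defH : (H :&: A) * (H :&: B) = H.
    apply/eqP; rewrite eqEcard mul_subG ?subsetIl //=.
    have e1 := mul_cardG (H :&: A)%G (H :&: B)%G.
    have e2 := mul_cardG A B.
    rewrite defG in e2.
    have e3 : partn (#|A| * #|B|) pi = partn (#|G| * #|A :&: B|) pi by rewrite e2.
    rewrite !partnM ?cardG_gt0 // in e3.
    rewrite -(card_Hall hA) -(card_Hall hB) -(card_Hall hallH) in e3.
    have e4 : (H :&: A) :&: (H :&: B) = H :&: (A :&: B).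
      by rewrite setIACA setIid.
    rewrite e4 (card_Hall hAB) e3 in e1.
    rewrite -(@leq_pmul2r (partn #|A :&: B| pi)) ?part_gt0 //.
    by rewrite e1.
  have : nilpotent H.
    apply: (nilpotentS _ (Fitting_nil H)).
    rewrite -{1}defH; apply: mul_subG; apply: Fitting_max => //.
    - exact: normalGI sHG nsAG.
    - exact: normalGI sHG nsBG.
  by move=> nilH; move: nnK; rewrite (nilpotentS sKH nilH).
Qed.


Lemma UE (gT : finGroupType) (X : {group gT}) p q :
  solvable X -> usylow_edge X p q <-> NN X p q.
Proof.
move=> solX; split.
  by case/orP => /edge_NN // h; apply: NN_sym.
exact: NN_edge.
Qed.

Lemma NN_sub (gT : finGroupType) (A G : {group gT}) p q :
  A \subset G -> NN A p q -> NN G p q.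
Proof.
by move=> sAG [K [sKA pqK nnK]]; exists K; split => //; apply: subset_trans sAG.
Qed.

Theorem proposition1 (gT : finGroupType) (G A B : {group gT}) :
  solvable G -> A <| G -> B <| G -> A * B = G ->
  (forall p : nat, sylow_vertex G p = sylow_vertex A p || sylow_vertex B p) /\
  (forall p q : nat, usylow_edge G p q = usylow_edge A p q || usylow_edge B p q).
Proof.
move=> solG nsAG nsBG defG.
have sAG := normal_sub nsAG; have sBG := normal_sub nsBG.
have solA := solvableS sAG solG; have solB := solvableS sBG solG.
split.
  move=> p; rewrite /sylow_vertex !mem_primes !cardG_gt0 /=.
  case: (prime p) / boolP => //= pr_p.
  have e2 := mul_cardG A B; rewrite defG in e2.
  apply/idP/idP.
    move=> dG; rewrite -Euclid_dvdM // e2; exact: dvdn_mulr.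
  by case/orP=> d; apply: dvdn_trans d (cardSg _).
move=> p q; apply/idP/orP.
  move/(UE p q solG) => hG.
  case hA: (usylow_edge A p q); [by left | right].
  apply/(UE p q solB); apply: (NN_split solG nsAG nsBG defG hG).
  by move/(UE p q solA); rewrite hA.
case=> [/(UE p q solA) h | /(UE p q solB) h]; apply/(UE p q solG).
  exact: NN_sub sAG h.
exact: NN_sub sBG h.
Qed.
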